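(* Let $(H,k,\chi)$ be an instance of Precoloring Extension with $H=(\{1,\dots,n\},F)$ having at least one edge and $\chi:V_0\to\{1,\dots,k\}$. Let $X=nk+1$; let $u_j=\chi(j)$, $\ell_j=\chi(j)$ for $j\in V_0$ and $u_j=k$, $\ell_j=1$ for $j\notin V_0$. Construct a $P_n\,|\,\mathrm{conc}\,|\,\sum C_j$ instance: jobs $1,\dots,n$ with $p_j=1$ and conflict graph initially $H$; for each $j\in\{1,\dots,n\}$, jobs $j(1),\dots,j(X)$ with processing time $X-u_j$, each in conflict with $j$, and for each $i\in\{1,\dots,X\}$ jobs $j(i,1),\dots,j(i,X)$ with processing time $u_j$, each in conflict with $j(i)$; for each $j\in V_0$ with $\chi(j)>1$, jobs $j^*(1),\dots,j^*(X)$ with processing time $\ell_j-1$, each in conflict with $j$ only. Let $K=\sum_{j=1}^n\big[(1+u_j)X^2+(\ell_j-1)X\big]+nk$. If $(H,k,\chi)$ has a solution $\chi':\{1,\dots,n\}\to\{1,\dots,k\}$, then the constructed instance has a feasible schedule with total completion time at most $K$.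
   Context: Precoloring Extension: given a graph $H=(V,F)$, an integer $k$, and a proper coloring $\chi:V_0\to\{1,\dots,k\}$ of $H[V_0]$ for some $V_0\subseteq V$, a solution is a proper coloring $\chi':V\to\{1,\dots,k\}$ of $H$ with $\chi'(v)=\chi(v)$ for all $v\in V_0$. In $P_n\,|\,\mathrm{conc}\,|\,\sum C_j$, each job $j$ has integer processing time $p_j\ge1$ and release time $0$, and there is a conflict graph $G$ (the edges listed); a schedule assigning completion times $C_j\in\mathbb{N}$ is feasible if $C_j-p_j\ge0$ for all $j$ and $[C_i-p_i,C_i)\cap[C_j-p_j,C_j)=\emptyset$ for all conflicting pairs $\{i,j\}$; the total completion time is $\sum_j C_j$ over all jobs. *)

(* Defs.v *)
From mathcomp Require Import all_boot.
Set Implicit Arguments. Unset Strict Implicit. Unset Printing Implicit Defensive.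

(* Vertices/jobs 1..n are represented by 'I_n (0..n-1); indices 1..X by 'I_X. *)

Definition proper_on (n : nat) (H : rel 'I_n) (A : {set 'I_n}) (c : 'I_n -> nat) :=
  forall i j, i \in A -> j \in A -> H i j -> c i <> c j.

Definition precoloring (n k : nat) (H : rel 'I_n) (V0 : {set 'I_n}) (chi : 'I_n -> nat) :=
  (forall j, j \in V0 -> 1 <= chi j <= k) /\ proper_on H V0 chi.

Definition pce_solution (n k : nat) (H : rel 'I_n) (V0 : {set 'I_n})
  (chi : 'I_n -> nat) (chi' : 'I_n -> nat) :=
  (forall j, 1 <= chi' j <= k) /\ proper_on H setT chi' /\
  (forall j, j \in V0 -> chi' j = chi j).

Definition feasible_schedule (J : finType) (p : J -> nat) (conf : rel J) (C : J -> nat) :=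
  (forall j, p j <= C j) /\
  (forall i j, conf i j ->
     forall t, ~ ((C i - p i <= t < C i) /\ (C j - p j <= t < C j))).

Definition total_completion (J : finType) (C : J -> nat) := \sum_(j : J) C j.

Section Reduction.
Variables (n k : nat) (H : rel 'I_n) (V0 : {set 'I_n}) (chi : 'I_n -> nat).

Definition Xr := n * k + 1.
Definition ur (j : 'I_n) := if j \in V0 then chi j else k.
Definition lr (j : 'I_n) := if j \in V0 then chi j else 1.
Definition star_pred (j : 'I_n) := (j \in V0) && (1 < chi j).

(* base jobs j; jobs j(i); jobs j(i,i'); jobs j^*(i) for j in V0 with chi j > 1 *)
Definition red_job : finType :=
  (('I_n + ('I_n * 'I_Xr)) + (('I_n * 'I_Xr * 'I_Xr) + ({j : 'I_n | star_pred j} * 'I_Xr)))%type.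

Definition red_p (x : red_job) : nat :=
  match x with
  | inl (inl j) => 1
  | inl (inr (j, i)) => Xr - ur j
  | inr (inl (j, i, i')) => ur j
  | inr (inr (js, i)) => lr (val js) - 1
  end.

Definition red_edge (x y : red_job) : bool :=
  match x, y with
  | inl (inl a), inl (inl b) => H a b
  | inl (inl a), inl (inr (j, i)) => a == j
  | inl (inr (j, i)), inr (inl (j', i', _)) => (j == j') && (i == i')
  | inl (inl a), inr (inr (js, i)) => a == val js
  | _, _ => false
  end.

Definition red_conf : rel red_job := fun x y => red_edge x y || red_edge y x.

Definition red_K : nat :=
  \sum_(j < n) ((1 + ur j) * Xr ^ 2 + (lr j - 1) * Xr) + n * k.
End Reduction.

(* Main.v *)
Require Import Defs.
From mathcomp Require Import all_boot zify.

Lemma sig_sum_le (I:finType) (P:pred I) (F:I->nat): \sum_(x : {j | P j}) F (val x) <= \sum_j F j.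
Proof.
rewrite (bigID P) /=.
have <- := @big_sub _ _ _ _ P F.
exact: leq_addr.
Qed.

Theorem lemma11 (n k : nat) (H : rel 'I_n) (V0 : {set 'I_n}) (chi : 'I_n -> nat) :
  symmetric H -> irreflexive H -> (exists i j, H i j) ->
  precoloring k H V0 chi ->
  (exists chi' : 'I_n -> nat, pce_solution k H V0 chi chi') ->
  exists C : red_job k V0 chi -> nat,
    feasible_schedule (@red_p n k V0 chi) (@red_conf n k H V0 chi) C /\
    total_completion C <= red_K k V0 chi.
Proof.
move=> Hsym Hirr [i0 _] [Hchi _] [c [Hc [Hprop Hagree]]].
have n0 : 0 < n by have := ltn_ord i0; lia.
have HX : k < Xr n k by rewrite /Xr; nia.
set X := Xr n k in HX *.
have Hu : forall j, c j <= ur k V0 chi j <= k.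
  move=> j; rewrite /ur; case: ifP => jV.
    by rewrite Hagree //; have := Hchi j jV; lia.
  by have := Hc j; lia.
have Hl : forall j, star_pred V0 chi j -> lr V0 chi j = c j.
  by move=> j /andP[jV _]; rewrite /lr jV Hagree.
pose C (x : red_job k V0 chi) : nat :=
  match x with
  | inl (inl j) => c j
  | inl (inr (j, i)) => X
  | inr (inl (j, i, i')) => ur k V0 chi j
  | inr (inr (js, i)) => lr V0 chi (val js) - 1
  end.
exists C; split; first split.
- case=> [[j|[j i]]|[[[j i] i']|[js i]]] /=; rewrite /red_p /C //.
  + by have := Hc j; lia.
  + lia.
- have E : forall x y, red_edge H x y -> forall t,
     ~ ((C x - red_p x <= t < C x) /\ (C y - red_p y <= t < C y)).
    case=> [[a|[j i]]|[[[j i] i']|[js i]]];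
    case=> [[b|[j2 i2]]|[[[j3 i3] i4]|[js' i5]]] //= He t;
    rewrite /red_p /C.
    + have := Hprop a b (in_setT _) (in_setT _) He. have := Hc a; have := Hc b; lia.
    + move/eqP: He => <-; have := Hu a; lia.
    + have Hla : lr V0 chi (sval js') = c a by rewrite (eqP He) Hl //; exact: (svalP js').
      rewrite Hla; lia.
    + case/andP: He => /eqP E1 /eqP E2; subst; lia.
  move=> x y /orP[] He t; first exact: E.
  by move=> [h1 h2]; apply: (E _ _ He t).
- rewrite /total_completion /red_K !big_sumType.
  set u := ur k V0 chi; set l := lr V0 chi.
  have A : \sum_(j : 'I_n) C (inl (inl j)) <= n * k.
    rewrite /C -[n in n * k]card_ord -sum_nat_const; apply: leq_sum => j _.
    by have := Hc j; lia.
  have B : \sum_(p : 'I_n * 'I_X) C (inl (inr p)) = \sum_(j < n) X * X.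
    transitivity (\sum_(j < n) \sum_(i < X) X).
      by rewrite pair_bigA; apply: eq_bigr => -[j i] _.
    by apply: eq_bigr => j _; rewrite sum_nat_const card_ord.
  have Cc : \sum_(p : 'I_n * 'I_X * 'I_X) C (inr (inl p)) = \sum_(j < n) u j * (X * X).
    transitivity (\sum_(j < n) \sum_(i < X) \sum_(i' < X) u j).
      rewrite pair_bigA pair_bigA; apply: eq_bigr => -[[j i] i'] _ //.
    apply: eq_bigr => j _.
    rewrite (eq_bigr (fun _ => u j * X)); last first.
      by move=> i _; rewrite sum_nat_const card_ord mulnC.
    by rewrite sum_nat_const card_ord; lia.
  have D : \sum_(p : {j : 'I_n | star_pred V0 chi j} * 'I_X) C (inr (inr p))
             <= \sum_(j < n) (l j - 1) * X.
    have -> : \sum_(p : {j : 'I_n | star_pred V0 chi j} * 'I_X) C (inr (inr p)) =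
        \sum_(js : {j : 'I_n | star_pred V0 chi j}) \sum_(i < X) (l (val js) - 1).
      by rewrite pair_bigA; apply: eq_bigr => -[js i] _.
    rewrite (eq_bigr (fun js => (l (val js) - 1) * X)); last first.
      by move=> js _; rewrite sum_nat_const card_ord mulnC.
    exact: (@sig_sum_le _ (star_pred V0 chi) (fun j => (l j - 1) * X)).
  have E : \sum_(j < n) ((1 + u j) * X ^ 2 + (l j - 1) * X) =
     \sum_(j < n) X * X + \sum_(j < n) u j * (X * X) + \sum_(j < n) (l j - 1) * X.
    rewrite -!big_split /=; apply: eq_bigr => j _; rewrite mulnDl mul1n expnS expn1; lia.
  apply: leq_trans (leq_add (leq_add A (leqnn _)) (leq_add (leqnn _) D)) _.
  rewrite B Cc E; lia.
Qed.
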